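(* Let $n\ge1$ and let $G_n$ be any benzenoid chain of length $n$. Then $\Psi(G_n)\le\Psi(L_n)$.
   Context: A matching of a graph is a set of pairwise vertex-disjoint edges; it is maximal if it is not a proper subset of another matching. $\Psi(G)$ is the number of maximal matchings of $G$. A benzenoid system is a connected plane graph without cut-vertices in which every bounded face is a hexagon, any two hexagonal faces being either disjoint or sharing exactly one edge (then they are adjacent). It is catacondensed if no vertex lies in three hexagons, and a benzenoid chain if moreover no hexagon is adjacent to three other hexagons; its length is its number of hexagons. In a chain, the two hexagons adjacent to only one other hexagon are terminal, the rest interior. An interior hexagon has exactly two vertices of degree 2; it is straight if these are non-adjacent. $L_n$ (polyacene) is the benzenoid chain of length $n$ all of whose interior hexagons are straight. *)

(* Defs.v *)
From mathcomp Require Import all_boot.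
Set Implicit Arguments. Unset Strict Implicit. Unset Printing Implicit Defensive.

(* A graph is given by a duplicate-free list E of edges (pairs of vertices).
   Edges are identified with their indices in E, i.e. elements of 'I_(size E). *)

Definition edge_of (E : seq (nat * nat)) (i : 'I_(size E)) : nat * nat :=
  nth (0, 0) E i.

Definition vdisjoint (e f : nat * nat) : bool :=
  [&& e.1 != f.1, e.1 != f.2, e.2 != f.1 & e.2 != f.2].

Definition is_matching (E : seq (nat * nat)) (M : {set 'I_(size E)}) : bool :=
  [forall i in M, forall j in M, (i != j) ==> vdisjoint (edge_of i) (edge_of j)].

Definition is_maximal_matching (E : seq (nat * nat)) (M : {set 'I_(size E)}) : bool :=
  is_matching M && [forall M' : {set 'I_(size E)}, (M \proper M') ==> ~~ is_matching M'].

Definition Psi (E : seq (nat * nat)) : nat :=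
  #|[set M : {set 'I_(size E)} | is_maximal_matching M]|.

(* Annelation type of an interior hexagon: the edge shared with the next
   hexagon is opposite to the edge shared with the previous one (Straight),
   or at one of the two non-adjacent, non-opposite positions (kinks). *)
Inductive annel := Straight | KinkL | KinkR.

Definition hex0_edges : seq (nat * nat) :=
  [:: (0, 1); (1, 2); (2, 3); (3, 4); (4, 5); (5, 0)].

(* new hexagon glued along the edge {x,y} of the previous hexagon, with
   fresh vertices k, k+1, k+2, k+3; its boundary cycle is x,k,k+1,k+2,k+3,y *)
Definition hex_edges (x y k : nat) : seq (nat * nat) :=
  [:: (x, k); (k, k.+1); (k.+1, k.+2); (k.+2, k.+3); (k.+3, y)].

(* edge of the hexagon with fresh vertices k..k+3 (glued along {x,y}) along
   which the next hexagon is glued; the shared edges are never adjacent *)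
Definition next_edge (a : annel) (k : nat) : nat * nat :=
  match a with
  | Straight => (k.+1, k.+2)
  | KinkL => (k, k.+1)
  | KinkR => (k.+2, k.+3)
  end.

(* hexagons 2,...,n, glued successively; ws lists the annelation types of the
   interior hexagons, the last glued hexagon is terminal *)
Fixpoint tail_edges (ws : seq annel) (x y k : nat) : seq (nat * nat) :=
  match ws with
  | [::] => hex_edges x y k
  | w :: ws' =>
      hex_edges x y k ++ tail_edges ws' (next_edge w k).1 (next_edge w k).2 (k + 4)
  end.

(* The benzenoid chain with n hexagons whose interior hexagons 2..n-1 have
   annelation types ws (size ws = n - 2). *)
Definition chain_edges (n : nat) (ws : seq annel) : seq (nat * nat) :=
  hex0_edges ++ (if n <= 1 then [::] else tail_edges ws 0 1 6).

Definition polyacene (n : nat) : seq (nat * nat) :=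
  chain_edges n (nseq (n - 2) Straight).

(* Main.v *)
Require Import Defs.
From mathcomp Require Import all_boot zify.
Set Implicit Arguments. Unset Strict Implicit. Unset Printing Implicit Defensive.

Definition cov := nat -> bool.
Definition req := cov -> bool.

Fixpoint leaves (E : seq (nat * nat)) (C : cov) (D : req) : seq (cov * req) :=
  match E with
  | [::] => [:: (C, D)]
  | e :: E' =>
      (if ~~ C e.1 && ~~ C e.2
       then leaves E' (fun v => C v || (v == e.1) || (v == e.2)) D else [::])
      ++ leaves E' C (fun G => D G && (G e.1 || G e.2))
  end.

Definition cnt E C D := count (fun l : cov * req => l.2 l.1) (leaves E C D).

Lemma leaves_cat E1 E2 C D :
  leaves (E1 ++ E2) C D = flatten [seq leaves E2 l.1 l.2 | l <- leaves E1 C D].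
Proof.
elim: E1 C D => [|e E1 IH] C D /=; first by rewrite cats0.
rewrite map_cat flatten_cat !IH; case: ifP => //.
Qed.

Lemma cnt_cat E1 E2 C D :
  cnt (E1 ++ E2) C D = sumn [seq cnt E2 l.1 l.2 | l <- leaves E1 C D].
Proof.
rewrite /cnt leaves_cat.
elim: (leaves E1 C D) => [|l s IH] //=.
by rewrite count_cat IH.
Qed.

Inductive F2 (A B : Type) (R : A -> B -> Prop) : seq A -> seq B -> Prop :=
| F2nil : F2 R [::] [::]
| F2cons a b s t : R a b -> F2 R s t -> F2 R (a :: s) (b :: t).

Lemma F2_cat A B (R : A -> B -> Prop) s1 t1 s2 t2 :
  F2 R s1 t1 -> F2 R s2 t2 -> F2 R (s1 ++ s2) (t1 ++ t2).
Proof. by elim=> //= a b s t Hab _ IH H2; constructor; auto. Qed.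

Lemma F2_impl A B (R R' : A -> B -> Prop) s t :
  (forall a b, R a b -> R' a b) -> F2 R s t -> F2 R' s t.
Proof. by move=> H; elim=> [|a b s' t' Hab _ IH]; constructor; auto. Qed.

Lemma F2_sumn A B (R : A -> B -> Prop) f g s t :
  (forall a b, R a b -> f a = g b) -> F2 R s t ->
  sumn (map f s) = sumn (map g t).
Proof. by move=> H; elim=> //= a b s' t' Hab _ ->; rewrite (H _ _ Hab). Qed.

Lemma F2_count A B (R : A -> B -> Prop) (f : pred A) (g : pred B) s t :
  (forall a b, R a b -> f a = g b) -> F2 R s t ->
  count f s = count g t.
Proof. by move=> H; elim=> //= a b s' t' Hab _ ->; rewrite (H _ _ Hab). Qed.

Definition agree (s : nat -> nat) (V : pred nat) (G1 G2 : cov) :=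
  forall v, V v -> G1 v = G2 (s v).
Definition RelD s V (Q1 Q2 : cov -> Prop) (D1 D2 : req) :=
  forall G1 G2, agree s V G1 G2 -> Q1 G1 -> Q2 G2 -> D1 G1 = D2 G2.
Definition LeafRel s V Q1 Q2 (C2 : cov) (l1 l2 : cov * req) :=
  [/\ agree s V l1.1 l2.1, RelD s V Q1 Q2 l1.2 l2.2 &
      forall w, l2.1 w != C2 w -> exists2 v, V v & s v = w].

Definition mapE (s : nat -> nat) (E : seq (nat * nat)) := [seq (s e.1, s e.2) | e <- E].

Lemma leaves_rel (s : nat -> nat) (V : pred nat) (Q1 Q2 : cov -> Prop)
  (E : seq (nat*nat)) (C1 C2 : cov) (D1 D2 : req) :
  (forall u v, V u -> V v -> s u = s v -> u = v) ->
  all (fun e => V e.1 && V e.2) E ->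
  agree s V C1 C2 -> RelD s V Q1 Q2 D1 D2 ->
  F2 (LeafRel s V Q1 Q2 C2) (leaves E C1 D1) (leaves (mapE s E) C2 D2).
Proof.
move=> inj; elim: E C1 C2 D1 D2 => [|e E IH] C1 C2 D1 D2 /=.
  move=> _ hC hD; apply: F2cons; last exact: F2nil.
  by split => // w; rewrite eqxx.
case/andP => /andP [V1 V2] VE hC hD.
apply: F2_cat.
  rewrite -!hC //; case: ifP => _; last constructor.
  apply: F2_impl; last first.
    apply: IH => //.
    move=> v Vv /=; rewrite hC //.
    congr (_ || _ || _); apply/eqP/eqP => [->//|]; by move/inj => ->.
  move=> l1 l2 [h1 h2 h3]; split => // w hw.
  case E1: (l2.1 w != (C2 w || (w == s e.1) || (w == s e.2))); first exact: h3.
  move/negbFE/eqP: E1 => E1; rewrite E1 in hw.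
  case: (w =P s e.1) => [->|ne1]; first by exists e.1.
  case: (w =P s e.2) => [->|ne2]; first by exists e.2.
  by move: hw; rewrite (introF eqP ne1) (introF eqP ne2) !orbF eqxx.
apply: F2_impl; last first.
  apply: IH => // G1 G2 hG q1 q2 /=; rewrite (hD G1 G2) // !hG //.
by [].
Qed.


Definition st := (bool * bool * (bool * bool * bool * bool))%type.
Definition frame (cx cy : bool) : cov := fun v => ((v == 0) && cx) || ((v == 1) && cy).
Definition rf (r : bool * bool * bool * bool) (p q : bool) : bool :=
  let: (r00, r01, r10, r11) := r in
  if p then (if q then r11 else r10) else (if q then r01 else r00).
Definition upd (F : cov) a b (p q : bool) : cov :=
  fun v => if v == a then p else if v == b then q else F v.
Definition r4of (g : bool -> bool -> bool) := (g false false, g false true, g true false, g true true).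
Lemma rf_r4of g p q : rf (r4of g) p q = g p q.
Proof. by case: p; case: q. Qed.
Definition stof a b (l : cov * req) : st :=
  (l.1 a, l.1 b, r4of (fun p q => l.2 (upd l.1 a b p q))).
Definition Dof r : req := fun G => rf r (G 0) (G 1).
Definition leavesS (s : st) := leaves (hex_edges 0 1 2) (frame s.1.1 s.1.2) (Dof s.2).
Definition trans w (s : st) := map (stof (next_edge w 2).1 (next_edge w 2).2) (leavesS s).
Definition fin (s : st) := count (fun l : cov * req => l.2 l.1) (leavesS s).
Fixpoint Acnt (ws : seq annel) (s : st) : nat :=
  match ws with
  | [::] => fin s
  | w :: ws' => sumn (map (Acnt ws') (trans w s))
  end.

Definition sg (x y k : nat) (v : nat) := if v == 0 then x else if v == 1 then y else k + (v - 2).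

Lemma mapE_hex x y k : mapE (sg x y k) (hex_edges 0 1 2) = hex_edges x y k.
Proof. by rewrite /mapE /sg /= addn0 addn1 addn2 addn3. Qed.

Lemma sg_next x y k w :
  sg x y k (next_edge w 2).1 = (next_edge w k).1 /\ sg x y k (next_edge w 2).2 = (next_edge w k).2.
Proof. by case: w; rewrite /sg /= ?addn0 ?addn1 ?addn2 ?addn3. Qed.

Lemma sg_inj x y k : x < k -> y < k -> x != y ->
  forall u v, u < 6 -> v < 6 -> sg x y k u = sg x y k v -> u = v.
Proof.
move=> hx hy hxy u v hu hv; rewrite /sg.
move/eqP: hxy => hxy.
by repeat case: ifP => /eqP ?; lia.
Qed.

Lemma sg_img x y k u v : u < 6 -> sg x y k u = v -> v < k -> v != x -> v != y -> False.
Proof.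
rewrite /sg => hu <-.
case: ifP => [_|_]; first by move=> _; rewrite eqxx.
case: ifP => [_|_]; first by move=> _; rewrite eqxx.
lia.
Qed.

Lemma sg_lt x y k u : x < k -> y < k -> u < 6 -> sg x y k u < k + 4.
Proof. by rewrite /sg => hx hy hu; repeat case: ifP => /eqP ?; lia. Qed.

Definition Q2of (x y k : nat) (C : cov) := fun G : cov => forall v, v < k -> v != x -> v != y -> G v = C v.

Lemma Lrel x y k (C : cov) (D : req) r :
  x < k -> y < k -> x != y -> (forall v, k <= v -> C v = false) ->
  (forall G, Q2of x y k C G -> D G = rf r (G x) (G y)) ->
  F2 (LeafRel (sg x y k) (fun v => v < 6) (fun _ => True) (Q2of x y k C) C)
     (leavesS (C x, C y, r)) (leaves (hex_edges x y k) C D).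
Proof.
move=> hx hy hxy hC hD.
rewrite -mapE_hex; apply: leaves_rel => //.
- exact: sg_inj.
- move=> [|[|v]] /= hv; rewrite /frame /sg /= ?orbF //.
  rewrite hC //; lia.
- move=> G1 G2 hG _ q2; rewrite hD // /Dof (hG 0) // (hG 1) //.
Qed.

Lemma Labs ws : forall x y k (C : cov) (D : req) r,
  x < k -> y < k -> x != y -> (forall v, k <= v -> C v = false) ->
  (forall G, Q2of x y k C G -> D G = rf r (G x) (G y)) ->
  cnt (tail_edges ws x y k) C D = Acnt ws (C x, C y, r).
Proof.
elim: ws => [|w ws IH] x y k C D r hx hy hxy hC hD;
  have rel := Lrel hx hy hxy hC hD.
- rewrite /cnt /= /fin /leavesS /=.
  symmetry; apply: F2_count rel => l1 l2 [h1 h2 h3].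
  apply: h2 => // v vk vx vy; apply/eqP; apply/negP => /negP /h3 [u hu hs].
  exact: (sg_img hu hs vk vx vy).
- have -> : tail_edges (w :: ws) x y k = hex_edges x y k ++
     tail_edges ws (next_edge w k).1 (next_edge w k).2 (k + 4) by [].
  rewrite cnt_cat /= /trans -map_comp.
  symmetry; apply: F2_sumn rel => l1 l2 [h1 h2 h3] /=.
  have [e1 e2] := sg_next x y k w.
  set a0 := (next_edge w 2).1 in e1 *; set b0 := (next_edge w 2).2 in e2 *.
  set a := (next_edge w k).1 in e1 *; set b := (next_edge w k).2 in e2 *.
  have a06 : a0 < 6 by rewrite /a0; case: (w).
  have b06 : b0 < 6 by rewrite /b0; case: (w).
  have ab0 : a0 != b0 by rewrite /a0 /b0; case: (w).
  have ak : k <= a by rewrite /a; case: (w) => /=; lia.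
  have bk : k <= b by rewrite /b; case: (w) => /=; lia.
  rewrite /stof /= (h1 a0) // (h1 b0) // e1 e2.
  rewrite (IH _ _ _ _ _ (r4of (fun p q => l1.2 (upd l1.1 a0 b0 p q)))) //.
  + by rewrite /a; case: (w) => /=; lia.
  + by rewrite /b; case: (w) => /=; lia.
  + by rewrite /a /b; case: (w) => /=; apply/eqP; lia.
  + move=> v hv; case E: (l2.1 v != C v).
      have [u hu hs] := h3 _ E.
      have := sg_lt hx hy hu; lia.
    by move/negbFE/eqP: E => ->; apply: hC; lia.
  + move=> G hG; rewrite rf_r4of; symmetry; apply: h2 => //.
      move=> u hu; rewrite /upd.
      case: (u =P a0) => [->|ua]; first by rewrite e1.
      case: (u =P b0) => [->|ub]; first by rewrite e2.
      rewrite h1 // hG //; first exact: sg_lt.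
        apply/eqP => E; apply: ua; apply: (sg_inj hx hy hxy hu a06); by rewrite E e1.
      apply/eqP => E; apply: ub; apply: (sg_inj hx hy hxy hu b06); by rewrite E e2.
    move=> v vk vx vy.
    rewrite hG; [|lia|apply/eqP; lia|apply/eqP; lia].
    apply/eqP; apply/negP => /negP /h3 [u hu hs].
    exact: (sg_img hu hs vk vx vy).
Qed.

Definition s0 : st := (false, false, (false, false, false, false)).
Definition s1 : st := (false, false, (false, false, false, true)).
Definition s2 : st := (false, false, (false, true, false, true)).
Definition s3 : st := (false, false, (false, false, true, true)).
Definition s4 : st := (false, false, (false, true, true, true)).
Definition s5 : st := (false, true, (false, false, false, false)).
Definition s6 : st := (false, true, (false, false, true, true)).
Definition s7 : st := (false, true, (false, true, true, true)).
Definition s8 : st := (true, false, (false, false, false, false)).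
Definition s9 : st := (true, false, (false, true, false, true)).
Definition s10 : st := (true, false, (false, true, true, true)).
Definition s11 : st := (true, true, (false, false, false, false)).
Definition s12 : st := (true, true, (false, false, false, true)).
Definition s13 : st := (true, true, (false, true, false, true)).
Definition s14 : st := (true, true, (false, false, true, true)).
Definition s15 : st := (true, true, (false, true, true, true)).
Definition s16 : st := (true, true, (true, true, true, true)).
Lemma tS0 : trans Straight s0 = [:: s11; s11; s5; s0; s0; s11; s8; s8; s11; s11; s5; s0; s0]. Proof. by vm_compute. Qed.
Lemma tS1 : trans Straight s1 = [:: s16; s11; s5; s4; s0; s11; s8; s8; s11; s11; s5; s0; s0]. Proof. by vm_compute. Qed.
Lemma tS2 : trans Straight s2 = [:: s16; s11; s5; s4; s0; s11; s10; s8; s11; s11; s5; s0; s0]. Proof. by vm_compute. Qed.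
Lemma tS3 : trans Straight s3 = [:: s16; s11; s7; s4; s0; s11; s8; s8; s11; s11; s5; s0; s0]. Proof. by vm_compute. Qed.
Lemma tS4 : trans Straight s4 = [:: s16; s11; s7; s4; s0; s11; s10; s8; s11; s11; s5; s0; s0]. Proof. by vm_compute. Qed.
Lemma tS5 : trans Straight s5 = [:: s11; s5; s0; s11; s8; s11; s5; s0]. Proof. by vm_compute. Qed.
Lemma tS6 : trans Straight s6 = [:: s13; s7; s2; s11; s8; s11; s5; s0]. Proof. by vm_compute. Qed.
Lemma tS7 : trans Straight s7 = [:: s13; s7; s2; s15; s9; s11; s5; s0]. Proof. by vm_compute. Qed.
Lemma tS8 : trans Straight s8 = [:: s11; s8; s8; s11; s11; s5; s0; s0]. Proof. by vm_compute. Qed.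
Lemma tS9 : trans Straight s9 = [:: s11; s10; s8; s14; s11; s5; s3; s0]. Proof. by vm_compute. Qed.
Lemma tS10 : trans Straight s10 = [:: s15; s10; s8; s14; s11; s6; s3; s0]. Proof. by vm_compute. Qed.
Lemma tS11 : trans Straight s11 = [:: s11; s8; s11; s5; s0]. Proof. by vm_compute. Qed.
Lemma tS12 : trans Straight s12 = [:: s15; s9; s12; s6; s1]. Proof. by vm_compute. Qed.
Lemma tS13 : trans Straight s13 = [:: s15; s9; s12; s6; s1]. Proof. by vm_compute. Qed.
Lemma tS14 : trans Straight s14 = [:: s15; s9; s12; s6; s1]. Proof. by vm_compute. Qed.
Lemma tS15 : trans Straight s15 = [:: s15; s9; s12; s6; s1]. Proof. by vm_compute. Qed.
Lemma tS16 : trans Straight s16 = [:: s15; s9; s12; s6; s1]. Proof. by vm_compute. Qed.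
Lemma tL0 : trans KinkL s0 = [:: s11; s11; s8; s8; s8; s11; s11; s11; s5; s5; s0; s0; s0]. Proof. by vm_compute. Qed.
Lemma tL1 : trans KinkL s1 = [:: s15; s11; s8; s9; s8; s11; s11; s11; s5; s5; s0; s0; s0]. Proof. by vm_compute. Qed.
Lemma tL2 : trans KinkL s2 = [:: s15; s11; s8; s9; s8; s11; s12; s11; s6; s5; s0; s1; s0]. Proof. by vm_compute. Qed.
Lemma tL3 : trans KinkL s3 = [:: s15; s11; s10; s9; s8; s11; s11; s11; s5; s5; s0; s0; s0]. Proof. by vm_compute. Qed.
Lemma tL4 : trans KinkL s4 = [:: s15; s11; s10; s9; s8; s11; s12; s11; s6; s5; s0; s1; s0]. Proof. by vm_compute. Qed.
Lemma tL5 : trans KinkL s5 = [:: s11; s8; s8; s11; s11; s5; s0; s0]. Proof. by vm_compute. Qed.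
Lemma tL6 : trans KinkL s6 = [:: s15; s10; s8; s11; s11; s5; s0; s0]. Proof. by vm_compute. Qed.
Lemma tL7 : trans KinkL s7 = [:: s15; s10; s8; s14; s11; s6; s3; s0]. Proof. by vm_compute. Qed.
Lemma tL8 : trans KinkL s8 = [:: s11; s11; s11; s5; s5; s0; s0; s0]. Proof. by vm_compute. Qed.
Lemma tL9 : trans KinkL s9 = [:: s11; s13; s11; s7; s5; s0; s2; s0]. Proof. by vm_compute. Qed.
Lemma tL10 : trans KinkL s10 = [:: s16; s13; s11; s7; s5; s4; s2; s0]. Proof. by vm_compute. Qed.
Lemma tL11 : trans KinkL s11 = [:: s11; s11; s5; s0; s0]. Proof. by vm_compute. Qed.
Lemma tL12 : trans KinkL s12 = [:: s16; s11; s7; s4; s0]. Proof. by vm_compute. Qed.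
Lemma tL13 : trans KinkL s13 = [:: s16; s11; s7; s4; s0]. Proof. by vm_compute. Qed.
Lemma tL14 : trans KinkL s14 = [:: s16; s11; s7; s4; s0]. Proof. by vm_compute. Qed.
Lemma tL15 : trans KinkL s15 = [:: s16; s11; s7; s4; s0]. Proof. by vm_compute. Qed.
Lemma tL16 : trans KinkL s16 = [:: s16; s11; s7; s4; s0]. Proof. by vm_compute. Qed.
Lemma tR0 : trans KinkR s0 = [:: s11; s8; s11; s5; s0; s11; s5; s0; s11; s8; s11; s5; s0]. Proof. by vm_compute. Qed.
Lemma tR1 : trans KinkR s1 = [:: s15; s8; s11; s6; s0; s11; s5; s0; s11; s8; s11; s5; s0]. Proof. by vm_compute. Qed.
Lemma tR2 : trans KinkR s2 = [:: s15; s8; s11; s6; s0; s11; s7; s0; s11; s8; s11; s5; s0]. Proof. by vm_compute. Qed.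
Lemma tR3 : trans KinkR s3 = [:: s15; s9; s12; s6; s1; s11; s5; s0; s11; s8; s11; s5; s0]. Proof. by vm_compute. Qed.
Lemma tR4 : trans KinkR s4 = [:: s15; s9; s12; s6; s1; s11; s7; s0; s11; s8; s11; s5; s0]. Proof. by vm_compute. Qed.
Lemma tR5 : trans KinkR s5 = [:: s8; s11; s0; s11; s0; s8; s11; s0]. Proof. by vm_compute. Qed.
Lemma tR6 : trans KinkR s6 = [:: s10; s14; s3; s11; s0; s8; s11; s0]. Proof. by vm_compute. Qed.
Lemma tR7 : trans KinkR s7 = [:: s10; s14; s3; s16; s4; s8; s11; s0]. Proof. by vm_compute. Qed.
Lemma tR8 : trans KinkR s8 = [:: s11; s5; s0; s11; s8; s11; s5; s0]. Proof. by vm_compute. Qed.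
Lemma tR9 : trans KinkR s9 = [:: s11; s7; s0; s15; s8; s11; s5; s0]. Proof. by vm_compute. Qed.
Lemma tR10 : trans KinkR s10 = [:: s13; s7; s2; s15; s9; s11; s5; s0]. Proof. by vm_compute. Qed.
Lemma tR11 : trans KinkR s11 = [:: s11; s0; s8; s11; s0]. Proof. by vm_compute. Qed.
Lemma tR12 : trans KinkR s12 = [:: s16; s4; s10; s11; s0]. Proof. by vm_compute. Qed.
Lemma tR13 : trans KinkR s13 = [:: s16; s4; s10; s11; s0]. Proof. by vm_compute. Qed.
Lemma tR14 : trans KinkR s14 = [:: s16; s4; s10; s11; s0]. Proof. by vm_compute. Qed.
Lemma tR15 : trans KinkR s15 = [:: s16; s4; s10; s11; s0]. Proof. by vm_compute. Qed.
Lemma tR16 : trans KinkR s16 = [:: s16; s4; s10; s11; s0]. Proof. by vm_compute. Qed.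
Definition Struct ws := Acnt ws s0 = 0 /\ Acnt ws s5 = 0 /\ Acnt ws s8 = 0 /\ Acnt ws s11 = 0 /\ Acnt ws s13 = Acnt ws s12 /\ Acnt ws s14 = Acnt ws s12 /\ Acnt ws s15 = Acnt ws s12 /\ Acnt ws s16 = Acnt ws s12.
Lemma Acnt_cons w ws s : Acnt (w :: ws) s = sumn (map (Acnt ws) (trans w s)). Proof. by []. Qed.
Lemma struct ws : Struct ws.
Proof.
elim: ws => [|w ws IH]; first by vm_compute; repeat split.
move: IH => [h0 [h1 [h2 [h3 [h4 [h5 [h6 h7]]]]]]].
rewrite /Struct; case: w; rewrite !Acnt_cons.
all: rewrite ?tS0 ?tS5 ?tS8 ?tS11 ?tS13 ?tS14 ?tS15 ?tS16 ?tL0 ?tL5 ?tL8 ?tL11 ?tL13 ?tL14 ?tL15 ?tL16 ?tR0 ?tR5 ?tR8 ?tR11 ?tR13 ?tR14 ?tR15 ?tR16 /=.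
all: rewrite ?h0 ?h1 ?h2 ?h3 ?h4 ?h5 ?h6 ?h7; repeat split; lia.
Qed.
Lemma rS0 ws : Acnt (Straight :: ws) s1 = Acnt ws s4 + Acnt ws s12.
Proof. have := struct ws; move=> [h0 [h1 [h2 [h3 [h4 [h5 [h6 h7]]]]]]].
rewrite Acnt_cons tS1 /= ?h0 ?h1 ?h2 ?h3 ?h4 ?h5 ?h6 ?h7; lia. Qed.
Lemma rS1 ws : Acnt (Straight :: ws) s3 = Acnt ws s4 + Acnt ws s7 + Acnt ws s12.
Proof. have := struct ws; move=> [h0 [h1 [h2 [h3 [h4 [h5 [h6 h7]]]]]]].
rewrite Acnt_cons tS3 /= ?h0 ?h1 ?h2 ?h3 ?h4 ?h5 ?h6 ?h7; lia. Qed.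
Lemma rS2 ws : Acnt (Straight :: ws) s2 = Acnt ws s4 + Acnt ws s10 + Acnt ws s12.
Proof. have := struct ws; move=> [h0 [h1 [h2 [h3 [h4 [h5 [h6 h7]]]]]]].
rewrite Acnt_cons tS2 /= ?h0 ?h1 ?h2 ?h3 ?h4 ?h5 ?h6 ?h7; lia. Qed.
Lemma rS3 ws : Acnt (Straight :: ws) s4 = Acnt ws s4 + Acnt ws s7 + Acnt ws s10 + Acnt ws s12.
Proof. have := struct ws; move=> [h0 [h1 [h2 [h3 [h4 [h5 [h6 h7]]]]]]].
rewrite Acnt_cons tS4 /= ?h0 ?h1 ?h2 ?h3 ?h4 ?h5 ?h6 ?h7; lia. Qed.
Lemma rS4 ws : Acnt (Straight :: ws) s6 = Acnt ws s2 + Acnt ws s7 + Acnt ws s12.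
Proof. have := struct ws; move=> [h0 [h1 [h2 [h3 [h4 [h5 [h6 h7]]]]]]].
rewrite Acnt_cons tS6 /= ?h0 ?h1 ?h2 ?h3 ?h4 ?h5 ?h6 ?h7; lia. Qed.
Lemma rS5 ws : Acnt (Straight :: ws) s7 = Acnt ws s2 + Acnt ws s7 + Acnt ws s9 + 2 * Acnt ws s12.
Proof. have := struct ws; move=> [h0 [h1 [h2 [h3 [h4 [h5 [h6 h7]]]]]]].
rewrite Acnt_cons tS7 /= ?h0 ?h1 ?h2 ?h3 ?h4 ?h5 ?h6 ?h7; lia. Qed.
Lemma rS6 ws : Acnt (Straight :: ws) s9 = Acnt ws s3 + Acnt ws s10 + Acnt ws s12.
Proof. have := struct ws; move=> [h0 [h1 [h2 [h3 [h4 [h5 [h6 h7]]]]]]].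
rewrite Acnt_cons tS9 /= ?h0 ?h1 ?h2 ?h3 ?h4 ?h5 ?h6 ?h7; lia. Qed.
Lemma rS7 ws : Acnt (Straight :: ws) s10 = Acnt ws s3 + Acnt ws s6 + Acnt ws s10 + 2 * Acnt ws s12.
Proof. have := struct ws; move=> [h0 [h1 [h2 [h3 [h4 [h5 [h6 h7]]]]]]].
rewrite Acnt_cons tS10 /= ?h0 ?h1 ?h2 ?h3 ?h4 ?h5 ?h6 ?h7; lia. Qed.
Lemma rS8 ws : Acnt (Straight :: ws) s12 = Acnt ws s1 + Acnt ws s6 + Acnt ws s9 + 2 * Acnt ws s12.
Proof. have := struct ws; move=> [h0 [h1 [h2 [h3 [h4 [h5 [h6 h7]]]]]]].
rewrite Acnt_cons tS12 /= ?h0 ?h1 ?h2 ?h3 ?h4 ?h5 ?h6 ?h7; lia. Qed.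
Lemma rL0 ws : Acnt (KinkL :: ws) s1 = Acnt ws s9 + Acnt ws s12.
Proof. have := struct ws; move=> [h0 [h1 [h2 [h3 [h4 [h5 [h6 h7]]]]]]].
rewrite Acnt_cons tL1 /= ?h0 ?h1 ?h2 ?h3 ?h4 ?h5 ?h6 ?h7; lia. Qed.
Lemma rL1 ws : Acnt (KinkL :: ws) s3 = Acnt ws s9 + Acnt ws s10 + Acnt ws s12.
Proof. have := struct ws; move=> [h0 [h1 [h2 [h3 [h4 [h5 [h6 h7]]]]]]].
rewrite Acnt_cons tL3 /= ?h0 ?h1 ?h2 ?h3 ?h4 ?h5 ?h6 ?h7; lia. Qed.
Lemma rL2 ws : Acnt (KinkL :: ws) s2 = Acnt ws s1 + Acnt ws s6 + Acnt ws s9 + 2 * Acnt ws s12.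
Proof. have := struct ws; move=> [h0 [h1 [h2 [h3 [h4 [h5 [h6 h7]]]]]]].
rewrite Acnt_cons tL2 /= ?h0 ?h1 ?h2 ?h3 ?h4 ?h5 ?h6 ?h7; lia. Qed.
Lemma rL3 ws : Acnt (KinkL :: ws) s4 = Acnt ws s1 + Acnt ws s6 + Acnt ws s9 + Acnt ws s10 + 2 * Acnt ws s12.
Proof. have := struct ws; move=> [h0 [h1 [h2 [h3 [h4 [h5 [h6 h7]]]]]]].
rewrite Acnt_cons tL4 /= ?h0 ?h1 ?h2 ?h3 ?h4 ?h5 ?h6 ?h7; lia. Qed.
Lemma rL4 ws : Acnt (KinkL :: ws) s6 = Acnt ws s10 + Acnt ws s12.
Proof. have := struct ws; move=> [h0 [h1 [h2 [h3 [h4 [h5 [h6 h7]]]]]]].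
rewrite Acnt_cons tL6 /= ?h0 ?h1 ?h2 ?h3 ?h4 ?h5 ?h6 ?h7; lia. Qed.
Lemma rL5 ws : Acnt (KinkL :: ws) s7 = Acnt ws s3 + Acnt ws s6 + Acnt ws s10 + 2 * Acnt ws s12.
Proof. have := struct ws; move=> [h0 [h1 [h2 [h3 [h4 [h5 [h6 h7]]]]]]].
rewrite Acnt_cons tL7 /= ?h0 ?h1 ?h2 ?h3 ?h4 ?h5 ?h6 ?h7; lia. Qed.
Lemma rL6 ws : Acnt (KinkL :: ws) s9 = Acnt ws s2 + Acnt ws s7 + Acnt ws s12.
Proof. have := struct ws; move=> [h0 [h1 [h2 [h3 [h4 [h5 [h6 h7]]]]]]].
rewrite Acnt_cons tL9 /= ?h0 ?h1 ?h2 ?h3 ?h4 ?h5 ?h6 ?h7; lia. Qed.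
Lemma rL7 ws : Acnt (KinkL :: ws) s10 = Acnt ws s2 + Acnt ws s4 + Acnt ws s7 + 2 * Acnt ws s12.
Proof. have := struct ws; move=> [h0 [h1 [h2 [h3 [h4 [h5 [h6 h7]]]]]]].
rewrite Acnt_cons tL10 /= ?h0 ?h1 ?h2 ?h3 ?h4 ?h5 ?h6 ?h7; lia. Qed.
Lemma rL8 ws : Acnt (KinkL :: ws) s12 = Acnt ws s4 + Acnt ws s7 + Acnt ws s12.
Proof. have := struct ws; move=> [h0 [h1 [h2 [h3 [h4 [h5 [h6 h7]]]]]]].
rewrite Acnt_cons tL12 /= ?h0 ?h1 ?h2 ?h3 ?h4 ?h5 ?h6 ?h7; lia. Qed.
Lemma rR0 ws : Acnt (KinkR :: ws) s1 = Acnt ws s6 + Acnt ws s12.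
Proof. have := struct ws; move=> [h0 [h1 [h2 [h3 [h4 [h5 [h6 h7]]]]]]].
rewrite Acnt_cons tR1 /= ?h0 ?h1 ?h2 ?h3 ?h4 ?h5 ?h6 ?h7; lia. Qed.
Lemma rR1 ws : Acnt (KinkR :: ws) s3 = Acnt ws s1 + Acnt ws s6 + Acnt ws s9 + 2 * Acnt ws s12.
Proof. have := struct ws; move=> [h0 [h1 [h2 [h3 [h4 [h5 [h6 h7]]]]]]].
rewrite Acnt_cons tR3 /= ?h0 ?h1 ?h2 ?h3 ?h4 ?h5 ?h6 ?h7; lia. Qed.
Lemma rR2 ws : Acnt (KinkR :: ws) s2 = Acnt ws s6 + Acnt ws s7 + Acnt ws s12.
Proof. have := struct ws; move=> [h0 [h1 [h2 [h3 [h4 [h5 [h6 h7]]]]]]].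
rewrite Acnt_cons tR2 /= ?h0 ?h1 ?h2 ?h3 ?h4 ?h5 ?h6 ?h7; lia. Qed.
Lemma rR3 ws : Acnt (KinkR :: ws) s4 = Acnt ws s1 + Acnt ws s6 + Acnt ws s7 + Acnt ws s9 + 2 * Acnt ws s12.
Proof. have := struct ws; move=> [h0 [h1 [h2 [h3 [h4 [h5 [h6 h7]]]]]]].
rewrite Acnt_cons tR4 /= ?h0 ?h1 ?h2 ?h3 ?h4 ?h5 ?h6 ?h7; lia. Qed.
Lemma rR4 ws : Acnt (KinkR :: ws) s6 = Acnt ws s3 + Acnt ws s10 + Acnt ws s12.
Proof. have := struct ws; move=> [h0 [h1 [h2 [h3 [h4 [h5 [h6 h7]]]]]]].
rewrite Acnt_cons tR6 /= ?h0 ?h1 ?h2 ?h3 ?h4 ?h5 ?h6 ?h7; lia. Qed.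
Lemma rR5 ws : Acnt (KinkR :: ws) s7 = Acnt ws s3 + Acnt ws s4 + Acnt ws s10 + 2 * Acnt ws s12.
Proof. have := struct ws; move=> [h0 [h1 [h2 [h3 [h4 [h5 [h6 h7]]]]]]].
rewrite Acnt_cons tR7 /= ?h0 ?h1 ?h2 ?h3 ?h4 ?h5 ?h6 ?h7; lia. Qed.
Lemma rR6 ws : Acnt (KinkR :: ws) s9 = Acnt ws s7 + Acnt ws s12.
Proof. have := struct ws; move=> [h0 [h1 [h2 [h3 [h4 [h5 [h6 h7]]]]]]].
rewrite Acnt_cons tR9 /= ?h0 ?h1 ?h2 ?h3 ?h4 ?h5 ?h6 ?h7; lia. Qed.
Lemma rR7 ws : Acnt (KinkR :: ws) s10 = Acnt ws s2 + Acnt ws s7 + Acnt ws s9 + 2 * Acnt ws s12.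
Proof. have := struct ws; move=> [h0 [h1 [h2 [h3 [h4 [h5 [h6 h7]]]]]]].
rewrite Acnt_cons tR10 /= ?h0 ?h1 ?h2 ?h3 ?h4 ?h5 ?h6 ?h7; lia. Qed.
Lemma rR8 ws : Acnt (KinkR :: ws) s12 = Acnt ws s4 + Acnt ws s10 + Acnt ws s12.
Proof. have := struct ws; move=> [h0 [h1 [h2 [h3 [h4 [h5 [h6 h7]]]]]]].
rewrite Acnt_cons tR12 /= ?h0 ?h1 ?h2 ?h3 ?h4 ?h5 ?h6 ?h7; lia. Qed.


Definition avoid (C : cov) (e : nat * nat) := ~~ C e.1 && ~~ C e.2.
Definition touch (v : nat) (f : nat * nat) := (v == f.1) || (v == f.2).

Fixpoint good (E : seq (nat * nat)) (C : cov) (D : req) (m : bitseq) : bool :=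
  match E, m with
  | [::], [::] => D C
  | e :: E', b :: m' =>
      if b then avoid C e && good E' (fun v => C v || (v == e.1) || (v == e.2)) D m'
      else good E' C (fun G => D G && (G e.1 || G e.2)) m'
  | _, _ => false
  end.

Fixpoint allmasks n : seq bitseq :=
  if n is n'.+1 then map (cons true) (allmasks n') ++ map (cons false) (allmasks n')
  else [:: [::]].

Lemma cnt_good E C D : cnt E C D = count (good E C D) (allmasks (size E)).
Proof.
rewrite /cnt; elim: E C D => [|e E IH] C D /=; first by rewrite addn0.
rewrite !count_cat !count_map -/(avoid C e).
congr (_ + _).
  case: (avoid C e) => /=; rewrite ?IH.
    by apply: eq_count => m.
  by rewrite (@eq_count _ _ pred0) ?count_pred0.
by rewrite IH; apply: eq_count => m.
Qed.

Definition Fof (C : cov) (m : bitseq) (E : seq (nat * nat)) : cov :=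
  fun v => C v || has (touch v) (mask m E).

Definition Dext (D : req) := forall G G', G =1 G' -> D G = D G'.

Lemma good_sem E : forall C D m, Dext D -> size m = size E ->
  good E C D m = [&& pairwise vdisjoint (mask m E), all (avoid C) (mask m E),
                     all (fun e => Fof C m E e.1 || Fof C m E e.2) (mask (map negb m) E)
                   & D (Fof C m E)].
Proof.
elim: E => [|e E IH] C D [|b m] hD //= hs.
  by rewrite (hD _ C) // => v; rewrite /Fof orbF.
case: hs => hs.
case: b => /=.
  rewrite IH //.
  set F' := Fof _ m E.
  have hF : F' =1 Fof C (true :: m) (e :: E).
    by move=> v; rewrite /F' /Fof /= /touch !orbA.
  rewrite (hD _ _ hF) (eq_all (a1 := fun e0 => F' e0.1 || F' e0.2) (a2 := fun e0 => Fof C (true :: m) (e :: E) e0.1 ||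
                                   Fof C (true :: m) (e :: E) e0.2)); last first.
    by move=> f /=; rewrite !hF.
  have hA : all (avoid (fun v => C v || (v == e.1) || (v == e.2))) (mask m E) =
            all (vdisjoint e) (mask m E) && all (avoid C) (mask m E).
    rewrite -all_predI; apply: eq_all => f /=.
    rewrite /avoid /vdisjoint (eq_sym e.1 f.1) (eq_sym e.1 f.2) (eq_sym e.2 f.1) (eq_sym e.2 f.2).
    by case: (C f.1); case: (C f.2); case: (f.1 == e.1); case: (f.1 == e.2);
       case: (f.2 == e.1); case: (f.2 == e.2).
  rewrite hA.
  case: (avoid C e); case: (all (vdisjoint e) (mask m E)); case: (all (avoid C) (mask m E)) => //=;
  by rewrite ?andbF.
rewrite IH //; try by move=> G G' hG; rewrite (hD _ _ hG) !hG.
rewrite (_ : Fof C (false :: m) (e :: E) = Fof C m E) //.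
case: (pairwise _ _); case: (all (avoid C) _); case: (all _ (mask (map negb m) E));
  case: (D _); case: (Fof C m E e.1 || Fof C m E e.2) => //.
Qed.


Definition mkn n (M : {set 'I_n}) : bitseq := [seq i \in M | i <- enum 'I_n].
Definition mkm (E : seq (nat * nat)) (M : {set 'I_(size E)}) : bitseq := mkn M.

Lemma map_edge_enum E : map (@edge_of E) (enum 'I_(size E)) = E.
Proof.
rewrite /edge_of (_ : (fun i : 'I_(size E) => nth (0, 0) E i) = nth (0,0) E \o val) //.
by rewrite map_comp val_enum_ord -/(mkseq _ _) mkseq_nth.
Qed.

Lemma mask_mkm E (M : {set 'I_(size E)}) :
  mask (mkm M) E = map (@edge_of E) [seq i <- enum 'I_(size E) | i \in M].
Proof. by rewrite filter_mask map_mask map_edge_enum. Qed.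

Lemma mask_mkmN E (M : {set 'I_(size E)}) :
  mask (map negb (mkm M)) E = map (@edge_of E) [seq i <- enum 'I_(size E) | i \notin M].
Proof. by rewrite /mkm /mkn -map_comp filter_mask map_mask map_edge_enum. Qed.

Lemma vdisjoint_sym e f : vdisjoint e f = vdisjoint f e.
Proof.
rewrite /vdisjoint (eq_sym e.1 f.1) (eq_sym e.1 f.2) (eq_sym e.2 f.1) (eq_sym e.2 f.2).
by case: (f.1 == e.1); case: (f.1 == e.2); case: (f.2 == e.1); case: (f.2 == e.2).
Qed.

Lemma pw_uniq (T : eqType) (r r' : rel T) s :
  uniq s -> (forall x y, x != y -> r x y = r' x y) -> pairwise r s = pairwise r' s.
Proof.
move=> us h; elim: s us => //= x s IH /andP [xs us].
rewrite IH //; congr (_ && _); apply: eq_in_all => y ys; apply: h.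
by apply: contraNneq xs => ->.
Qed.

Lemma mem_fM n (M : {set 'I_n}) i : (i \in [seq j <- enum 'I_n | j \in M]) = (i \in M).
Proof. by rewrite mem_filter mem_enum andbT. Qed.

Lemma matchingE E (M : {set 'I_(size E)}) :
  is_matching M = pairwise vdisjoint (mask (mkm M) E).
Proof.
rewrite mask_mkm pairwise_map.
rewrite (@pw_uniq _ _ (fun i j => (i == j) || vdisjoint (edge_of i) (edge_of j))).
- rewrite pairwise_all2rel //; last first.
    by move=> i j /=; rewrite eq_sym vdisjoint_sym.
  + by move=> i; rewrite eqxx.
  + apply/idP/idP.
    * move/forall_inP => H; apply/allrelP => i j; rewrite !mem_fM => iM jM.
      by have := forall_inP (H i iM) j jM; case: eqP.
    * move/allrelP => H; apply/forall_inP => i iM; apply/forall_inP => j jM; apply/implyP => ij.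
      have := H i j; rewrite !mem_fM => /(_ iM jM).
      by rewrite (negbTE ij).
- by rewrite filter_uniq // enum_uniq.
- by move=> i j /negbTE ->.
Qed.

Lemma touchE e f : (touch e.1 f || touch e.2 f) = ~~ vdisjoint e f.
Proof. by rewrite /touch /vdisjoint !negb_and !negbK !orbA. Qed.

Lemma mem_fMN n (M : {set 'I_n}) i : (i \in [seq j <- enum 'I_n | j \notin M]) = (i \notin M).
Proof. by rewrite mem_filter mem_enum andbT. Qed.

Lemma domE E (M : {set 'I_(size E)}) e :
  (Fof (fun _ => false) (mkm M) E e.1 || Fof (fun _ => false) (mkm M) E e.2) =
  [exists j in M, ~~ vdisjoint e (edge_of j)].
Proof.
rewrite /Fof /= -has_predU mask_mkm has_map.
apply/hasP/exists_inP => [[j jin h]|[j jM h]].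
  by exists j; rewrite -?mem_fM // -touchE.
by exists j; rewrite ?mem_fM //= touchE.
Qed.

Lemma dominatedE E (M : {set 'I_(size E)}) :
  all (fun e => Fof (fun _ => false) (mkm M) E e.1 || Fof (fun _ => false) (mkm M) E e.2)
      (mask (map negb (mkm M)) E) =
  [forall i, (i \notin M) ==> [exists j in M, ~~ vdisjoint (edge_of i) (edge_of j)]].
Proof.
rewrite mask_mkmN all_map.
apply/allP/forallP => [H i|H i].
  by apply/implyP => iM; rewrite -domE; apply: H; rewrite mem_fMN.
by rewrite mem_fMN => iM /=; rewrite domE; apply: (implyP (H i)).
Qed.

Lemma maxP E (M : {set 'I_(size E)}) : is_matching M ->
  [forall M' : {set 'I_(size E)}, (M \proper M') ==> ~~ is_matching M'] =
  [forall i, (i \notin M) ==> [exists j in M, ~~ vdisjoint (edge_of i) (edge_of j)]].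
Proof.
move=> hm; apply/forallP/forallP.
- move=> H i; apply/implyP => iM; apply: contraT => hnex.
  have hv : forall j, j \in M -> vdisjoint (edge_of i) (edge_of j).
    move=> j jM; apply: contraT => nv.
    have : [exists j in M, ~~ vdisjoint (edge_of i) (edge_of j)] by apply/exists_inP; exists j.
    by rewrite (negbTE hnex).
  have pr : M \proper (i |: M) by rewrite properUr // sub1set.
  have hmi : is_matching (i |: M).
    apply/forall_inP => a; rewrite in_setU1 => /orP [/eqP ->| aM];
      apply/forall_inP => b; rewrite in_setU1 => /orP [/eqP ->|bM]; apply/implyP => ab.
    + by rewrite eqxx in ab.
    + exact: hv.
    + by rewrite vdisjoint_sym; apply: hv.
    + by move/forall_inP: hm => /(_ a aM) /forall_inP /(_ b bM) /implyP /(_ ab).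
  by move: (H (i |: M)); rewrite pr hmi.
- move=> H M'; apply/implyP => /properP [sub [i iM' iM]]; apply/negP => hm'.
  have := H i; rewrite iM /= => /exists_inP [j jM nv].
  have jM' : j \in M' by apply: (subsetP sub).
  have ij : i != j by apply: contraNneq iM => ->.
  move/forall_inP: hm' => /(_ i iM') /forall_inP /(_ j jM') /implyP /(_ ij).
  by rewrite (negbTE nv).
Qed.

Lemma maxE E (M : {set 'I_(size E)}) :
  is_maximal_matching M = good E (fun _ => false) (fun _ => true) (mkm M).
Proof.
rewrite good_sem //; last by rewrite /mkm /mkn size_map size_enum_ord.
rewrite -matchingE dominatedE (@eq_all _ _ predT) ?all_predT // andbT /=.
rewrite /is_maximal_matching; case hm: (is_matching M) => //=.
exact: maxP.
Qed.


Lemma inj_cons (b : bool) : injective (cons b). Proof. by move=> x y []. Qed.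

Lemma mem_allmasks n s : (s \in allmasks n) = (size s == n).
Proof.
elim: n s => [|n IH] [|b s] //=.
  by apply/negP; rewrite mem_cat => /orP [] /mapP [].
rewrite mem_cat ?eqSS -IH; case: b.
  rewrite (mem_map (@inj_cons true)).
  case: (s \in allmasks n) => //=; apply/negP => /mapP [x _] //.
rewrite (mem_map (@inj_cons false)).
have -> : (false :: s \in [seq true :: i | i <- allmasks n]) = false by apply/negP => /mapP [x _].
by [].
Qed.

Lemma uniq_allmasks n : uniq (allmasks n).
Proof.
elim: n => [|n IH] //=.
rewrite cat_uniq !map_inj_uniq ?IH //=; try by move=> x y [].
rewrite andbT; apply/hasPn => s /mapP [x _ ->]; apply/negP => /mapP [y _] //.
Qed.

Lemma nth_mkn n (M : {set 'I_n}) (i : 'I_n) : nth false (@mkn n M) i = (i \in M).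
Proof. rewrite /mkn (nth_map i); first by rewrite nth_ord_enum. by rewrite size_enum_ord. Qed.

Lemma mkn_inj n : injective (@mkn n).
Proof.
move=> M1 M2 h; apply/setP => i.
have := congr1 (nth false ^~ i) h.
by rewrite !nth_mkn.
Qed.

Lemma count_sets n (P : pred bitseq) :
  #|[set M : {set 'I_n} | P (mkn M)]| = count P (allmasks n).
Proof.
rewrite cardE /enum_mem size_filter -enumT.
rewrite (@eq_count _ _ (P \o @mkn n)); last by move=> M; rewrite /= inE.
rewrite -count_map; apply/permP.
apply: uniq_perm; first by rewrite map_inj_uniq ?enum_uniq //; exact: mkn_inj.
  exact: uniq_allmasks.
move=> s; rewrite mem_allmasks; apply/mapP/eqP => [[M _ ->]|hs].
  by rewrite /mkn size_map size_enum_ord.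
exists [set i : 'I_n | nth false s i]; first by rewrite mem_enum.
apply: (@eq_from_nth _ false); first by rewrite /mkn size_map size_enum_ord.
move=> i; rewrite hs => hi.
by have := nth_mkn [set j : 'I_n | nth false s j] (Ordinal hi); rewrite /= inE => ->.
Qed.

Lemma Psi_cnt E : Psi E = cnt E (fun _ => false) (fun _ => true).
Proof.
rewrite cnt_good /Psi -count_sets.
by apply: eq_card => M; rewrite !inE maxE.
Qed.

From Stdlib Require Import ZArith Lia.
Lemma nseqS m : nseq m.+1 Straight = Straight :: nseq m Straight. Proof. by []. Qed.
Lemma symS m : Acnt (nseq m Straight) s2 = Acnt (nseq m Straight) s3 /\ Acnt (nseq m Straight) s9 = Acnt (nseq m Straight) s6 /\ Acnt (nseq m Straight) s10 = Acnt (nseq m Straight) s7.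
Proof. elim: m => [|m [e1 [e2 e3]]]; first by vm_compute; repeat split.
rewrite nseqS rS2 rS1 rS6 rS4 rS7 rS5 e1 e2 e3; repeat split; lia. Qed.
Lemma vS0_0 : Acnt (Straight :: nseq 0 Straight) s1 = 5. Proof. by vm_compute. Qed.
Lemma vS0_1 : Acnt (Straight :: nseq 0 Straight) s3 = 8. Proof. by vm_compute. Qed.
Lemma vS0_2 : Acnt (Straight :: nseq 0 Straight) s2 = 8. Proof. by vm_compute. Qed.
Lemma vS0_3 : Acnt (Straight :: nseq 0 Straight) s4 = 11. Proof. by vm_compute. Qed.
Lemma vS0_4 : Acnt (Straight :: nseq 0 Straight) s6 = 7. Proof. by vm_compute. Qed.
Lemma vS0_5 : Acnt (Straight :: nseq 0 Straight) s7 = 11. Proof. by vm_compute. Qed.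
Lemma vS0_6 : Acnt (Straight :: nseq 0 Straight) s9 = 7. Proof. by vm_compute. Qed.
Lemma vS0_7 : Acnt (Straight :: nseq 0 Straight) s10 = 11. Proof. by vm_compute. Qed.
Lemma vS0_8 : Acnt (Straight :: nseq 0 Straight) s12 = 9. Proof. by vm_compute. Qed.
Lemma vS1_0 : Acnt (Straight :: nseq 1 Straight) s1 = 20. Proof. by vm_compute. Qed.
Lemma vS1_1 : Acnt (Straight :: nseq 1 Straight) s3 = 31. Proof. by vm_compute. Qed.
Lemma vS1_2 : Acnt (Straight :: nseq 1 Straight) s2 = 31. Proof. by vm_compute. Qed.
Lemma vS1_3 : Acnt (Straight :: nseq 1 Straight) s4 = 42. Proof. by vm_compute. Qed.
Lemma vS1_4 : Acnt (Straight :: nseq 1 Straight) s6 = 28. Proof. by vm_compute. Qed.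
Lemma vS1_5 : Acnt (Straight :: nseq 1 Straight) s7 = 44. Proof. by vm_compute. Qed.
Lemma vS1_6 : Acnt (Straight :: nseq 1 Straight) s9 = 28. Proof. by vm_compute. Qed.
Lemma vS1_7 : Acnt (Straight :: nseq 1 Straight) s10 = 44. Proof. by vm_compute. Qed.
Lemma vS1_8 : Acnt (Straight :: nseq 1 Straight) s12 = 37. Proof. by vm_compute. Qed.
Lemma vS2_0 : Acnt (Straight :: nseq 2 Straight) s1 = 79. Proof. by vm_compute. Qed.
Lemma vS2_1 : Acnt (Straight :: nseq 2 Straight) s3 = 123. Proof. by vm_compute. Qed.
Lemma vS2_2 : Acnt (Straight :: nseq 2 Straight) s2 = 123. Proof. by vm_compute. Qed.
Lemma vS2_3 : Acnt (Straight :: nseq 2 Straight) s4 = 167. Proof. by vm_compute. Qed.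
Lemma vS2_4 : Acnt (Straight :: nseq 2 Straight) s6 = 112. Proof. by vm_compute. Qed.
Lemma vS2_5 : Acnt (Straight :: nseq 2 Straight) s7 = 177. Proof. by vm_compute. Qed.
Lemma vS2_6 : Acnt (Straight :: nseq 2 Straight) s9 = 112. Proof. by vm_compute. Qed.
Lemma vS2_7 : Acnt (Straight :: nseq 2 Straight) s10 = 177. Proof. by vm_compute. Qed.
Lemma vS2_8 : Acnt (Straight :: nseq 2 Straight) s12 = 150. Proof. by vm_compute. Qed.
Lemma vL0_0 : Acnt (KinkL :: nseq 0 Straight) s1 = 4. Proof. by vm_compute. Qed.
Lemma vL0_1 : Acnt (KinkL :: nseq 0 Straight) s3 = 7. Proof. by vm_compute. Qed.
Lemma vL0_2 : Acnt (KinkL :: nseq 0 Straight) s2 = 9. Proof. by vm_compute. Qed.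
Lemma vL0_3 : Acnt (KinkL :: nseq 0 Straight) s4 = 12. Proof. by vm_compute. Qed.
Lemma vL0_4 : Acnt (KinkL :: nseq 0 Straight) s6 = 5. Proof. by vm_compute. Qed.
Lemma vL0_5 : Acnt (KinkL :: nseq 0 Straight) s7 = 11. Proof. by vm_compute. Qed.
Lemma vL0_6 : Acnt (KinkL :: nseq 0 Straight) s9 = 7. Proof. by vm_compute. Qed.
Lemma vL0_7 : Acnt (KinkL :: nseq 0 Straight) s10 = 12. Proof. by vm_compute. Qed.
Lemma vL0_8 : Acnt (KinkL :: nseq 0 Straight) s12 = 8. Proof. by vm_compute. Qed.
Lemma vL1_0 : Acnt (KinkL :: nseq 1 Straight) s1 = 16. Proof. by vm_compute. Qed.
Lemma vL1_1 : Acnt (KinkL :: nseq 1 Straight) s3 = 27. Proof. by vm_compute. Qed.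
Lemma vL1_2 : Acnt (KinkL :: nseq 1 Straight) s2 = 37. Proof. by vm_compute. Qed.
Lemma vL1_3 : Acnt (KinkL :: nseq 1 Straight) s4 = 48. Proof. by vm_compute. Qed.
Lemma vL1_4 : Acnt (KinkL :: nseq 1 Straight) s6 = 20. Proof. by vm_compute. Qed.
Lemma vL1_5 : Acnt (KinkL :: nseq 1 Straight) s7 = 44. Proof. by vm_compute. Qed.
Lemma vL1_6 : Acnt (KinkL :: nseq 1 Straight) s9 = 28. Proof. by vm_compute. Qed.
Lemma vL1_7 : Acnt (KinkL :: nseq 1 Straight) s10 = 48. Proof. by vm_compute. Qed.
Lemma vL1_8 : Acnt (KinkL :: nseq 1 Straight) s12 = 31. Proof. by vm_compute. Qed.
Lemma vL2_0 : Acnt (KinkL :: nseq 2 Straight) s1 = 65. Proof. by vm_compute. Qed.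
Lemma vL2_1 : Acnt (KinkL :: nseq 2 Straight) s3 = 109. Proof. by vm_compute. Qed.
Lemma vL2_2 : Acnt (KinkL :: nseq 2 Straight) s2 = 150. Proof. by vm_compute. Qed.
Lemma vL2_3 : Acnt (KinkL :: nseq 2 Straight) s4 = 194. Proof. by vm_compute. Qed.
Lemma vL2_4 : Acnt (KinkL :: nseq 2 Straight) s6 = 81. Proof. by vm_compute. Qed.
Lemma vL2_5 : Acnt (KinkL :: nseq 2 Straight) s7 = 177. Proof. by vm_compute. Qed.
Lemma vL2_6 : Acnt (KinkL :: nseq 2 Straight) s9 = 112. Proof. by vm_compute. Qed.
Lemma vL2_7 : Acnt (KinkL :: nseq 2 Straight) s10 = 191. Proof. by vm_compute. Qed.
Lemma vL2_8 : Acnt (KinkL :: nseq 2 Straight) s12 = 123. Proof. by vm_compute. Qed.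
Lemma vR0_0 : Acnt (KinkR :: nseq 0 Straight) s1 = 4. Proof. by vm_compute. Qed.
Lemma vR0_1 : Acnt (KinkR :: nseq 0 Straight) s3 = 9. Proof. by vm_compute. Qed.
Lemma vR0_2 : Acnt (KinkR :: nseq 0 Straight) s2 = 7. Proof. by vm_compute. Qed.
Lemma vR0_3 : Acnt (KinkR :: nseq 0 Straight) s4 = 12. Proof. by vm_compute. Qed.
Lemma vR0_4 : Acnt (KinkR :: nseq 0 Straight) s6 = 7. Proof. by vm_compute. Qed.
Lemma vR0_5 : Acnt (KinkR :: nseq 0 Straight) s7 = 12. Proof. by vm_compute. Qed.
Lemma vR0_6 : Acnt (KinkR :: nseq 0 Straight) s9 = 5. Proof. by vm_compute. Qed.
Lemma vR0_7 : Acnt (KinkR :: nseq 0 Straight) s10 = 11. Proof. by vm_compute. Qed.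
Lemma vR0_8 : Acnt (KinkR :: nseq 0 Straight) s12 = 8. Proof. by vm_compute. Qed.
Lemma vR1_0 : Acnt (KinkR :: nseq 1 Straight) s1 = 16. Proof. by vm_compute. Qed.
Lemma vR1_1 : Acnt (KinkR :: nseq 1 Straight) s3 = 37. Proof. by vm_compute. Qed.
Lemma vR1_2 : Acnt (KinkR :: nseq 1 Straight) s2 = 27. Proof. by vm_compute. Qed.
Lemma vR1_3 : Acnt (KinkR :: nseq 1 Straight) s4 = 48. Proof. by vm_compute. Qed.
Lemma vR1_4 : Acnt (KinkR :: nseq 1 Straight) s6 = 28. Proof. by vm_compute. Qed.
Lemma vR1_5 : Acnt (KinkR :: nseq 1 Straight) s7 = 48. Proof. by vm_compute. Qed.
Lemma vR1_6 : Acnt (KinkR :: nseq 1 Straight) s9 = 20. Proof. by vm_compute. Qed.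
Lemma vR1_7 : Acnt (KinkR :: nseq 1 Straight) s10 = 44. Proof. by vm_compute. Qed.
Lemma vR1_8 : Acnt (KinkR :: nseq 1 Straight) s12 = 31. Proof. by vm_compute. Qed.
Lemma vR2_0 : Acnt (KinkR :: nseq 2 Straight) s1 = 65. Proof. by vm_compute. Qed.
Lemma vR2_1 : Acnt (KinkR :: nseq 2 Straight) s3 = 150. Proof. by vm_compute. Qed.
Lemma vR2_2 : Acnt (KinkR :: nseq 2 Straight) s2 = 109. Proof. by vm_compute. Qed.
Lemma vR2_3 : Acnt (KinkR :: nseq 2 Straight) s4 = 194. Proof. by vm_compute. Qed.
Lemma vR2_4 : Acnt (KinkR :: nseq 2 Straight) s6 = 112. Proof. by vm_compute. Qed.
Lemma vR2_5 : Acnt (KinkR :: nseq 2 Straight) s7 = 191. Proof. by vm_compute. Qed.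
Lemma vR2_6 : Acnt (KinkR :: nseq 2 Straight) s9 = 81. Proof. by vm_compute. Qed.
Lemma vR2_7 : Acnt (KinkR :: nseq 2 Straight) s10 = 177. Proof. by vm_compute. Qed.
Lemma vR2_8 : Acnt (KinkR :: nseq 2 Straight) s12 = 123. Proof. by vm_compute. Qed.
Lemma keyL m (u0 u1 u2 u3 u4 u5 u6 u7 u8 : Z) (hu0 : (0 <= u0)%Z) (hu1 : (0 <= u1)%Z) (hu2 : (0 <= u2)%Z) (hu3 : (0 <= u3)%Z) (hu4 : (0 <= u4)%Z) (hu5 : (0 <= u5)%Z) (hu6 : (0 <= u6)%Z) (hu7 : (0 <= u7)%Z) (hu8 : (0 <= u8)%Z) (H0 : (0 <= (u0 + u1 + (-1) * u2 + (-1) * u3 + (-1) * u7 + u8))%Z) (H1 : (0 <= ((-1) * u2 + (-1) * u3 + u8))%Z) (H2 : (0 <= (u0 + (-1) * u1 + u2 + (-1) * u3 + (-1) * u5 + u8))%Z) (H3 : (0 <= ((-1) * u1 + (-1) * u3 + u8))%Z) (H4 : (0 <= (u0 + (3) * u1 + u2 + (3) * u3 + u4 + u5 + u6 + u7 + (-1) * u8))%Z) (H5 : (0 <= (u0 + u1 + (3) * u2 + (3) * u3 + u4 + u5 + u6 + u7 + (-1) * u8))%Z) : ((u0 * Z.of_nat (Acnt (KinkL :: nseq m Straight) s1) + u1 * Z.of_nat (Acnt (KinkL :: nseq m Straight) s3) + u2 * Z.of_nat (Acnt (KinkL :: nseq m Straight) s2) + u3 * Z.of_nat (Acnt (KinkL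 :: nseq m Straight) s4) + u4 * Z.of_nat (Acnt (KinkL :: nseq m Straight) s6) + u5 * Z.of_nat (Acnt (KinkL :: nseq m Straight) s7) + u6 * Z.of_nat (Acnt (KinkL :: nseq m Straight) s9) + u7 * Z.of_nat (Acnt (KinkL :: nseq m Straight) s10) + u8 * Z.of_nat (Acnt (KinkL :: nseq m Straight) s12)) <= (u0 * Z.of_nat (Acnt (Straight :: nseq m Straight) s1) + u1 * Z.of_nat (Acnt (Straight :: nseq m Straight) s3) + u2 * Z.of_nat (Acnt (Straight :: nseq m Straight) s2) + u3 * Z.of_nat (Acnt (Straight :: nseq m Straight) s4) + u4 * Z.of_nat (Acnt (Straight :: nseq m Straight) s6) + u5 * Z.of_nat (Acnt (Straight :: nseq m Straight) s7) + u6 * Z.of_nat (Acnt (Straight :: nseq m Straight) s9) + u7 * Z.of_nat (Acnt (Straight :: nseq m Straight) s10) + u8 * Z.of_nat (Acnt (Straight :: nseq m Straight) s12)))%Z.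
Proof.
case: m => [|[|[|m]]]; first by rewrite ?vL0_0 ?vS0_0 ?vL0_1 ?vS0_1 ?vL0_2 ?vS0_2 ?vL0_3 ?vS0_3 ?vL0_4 ?vS0_4 ?vL0_5 ?vS0_5 ?vL0_6 ?vS0_6 ?vL0_7 ?vS0_7 ?vL0_8 ?vS0_8; lia.
- by rewrite ?vL1_0 ?vS1_0 ?vL1_1 ?vS1_1 ?vL1_2 ?vS1_2 ?vL1_3 ?vS1_3 ?vL1_4 ?vS1_4 ?vL1_5 ?vS1_5 ?vL1_6 ?vS1_6 ?vL1_7 ?vS1_7 ?vL1_8 ?vS1_8; lia.
- by rewrite ?vL2_0 ?vS2_0 ?vL2_1 ?vS2_1 ?vL2_2 ?vS2_2 ?vL2_3 ?vS2_3 ?vL2_4 ?vS2_4 ?vL2_5 ?vS2_5 ?vL2_6 ?vS2_6 ?vL2_7 ?vS2_7 ?vL2_8 ?vS2_8; lia.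
rewrite !nseqS; do 5 rewrite ?rL0 ?rL1 ?rL2 ?rL3 ?rL4 ?rL5 ?rL6 ?rL7 ?rL8 ?rS0 ?rS1 ?rS2 ?rS3 ?rS4 ?rS5 ?rS6 ?rS7 ?rS8.
have [e1 [e2 e3]] := symS m; rewrite e1 e2 e3.
have hP0 : (0 <= ((2) * u0 + (2) * u1 + (-5) * u2 + (-5) * u3 + (5) * u4 + (-2) * u7 + (5) * u8))%Z by lia.
have := Z.mul_nonneg_nonneg _ _ (Zle_0_nat (Acnt (nseq m Straight) s1)) hP0.
have hP1 : (0 <= ((3) * u0 + (3) * u1 + (-4) * u2 + (-4) * u3 + (6) * u4 + (-3) * u7 + (4) * u8))%Z by lia.
have := Z.mul_nonneg_nonneg _ _ (Zle_0_nat (Acnt (nseq m Straight) s3)) hP1.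
have hP2 : (0 <= (u0 + u1 + (-4) * u2 + (-4) * u3 + (3) * u4 + (-1) * u7 + (4) * u8))%Z by lia.
have := Z.mul_nonneg_nonneg _ _ (Zle_0_nat (Acnt (nseq m Straight) s4)) hP2.
have hP3 : (0 <= ((6) * u0 + (6) * u1 + (-11) * u2 + (-11) * u3 + (13) * u4 + (-6) * u7 + (11) * u8))%Z by lia.
have := Z.mul_nonneg_nonneg _ _ (Zle_0_nat (Acnt (nseq m Straight) s6)) hP3.
have hP4 : (0 <= ((4) * u0 + (4) * u1 + (-8) * u2 + (-8) * u3 + (9) * u4 + (-4) * u7 + (8) * u8))%Z by lia.
have := Z.mul_nonneg_nonneg _ _ (Zle_0_nat (Acnt (nseq m Straight) s7)) hP4.
have hP5 : (0 <= ((10) * u0 + (10) * u1 + (-19) * u2 + (-19) * u3 + (22) * u4 + (-10) * u7 + (19) * u8))%Z by lia.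
have := Z.mul_nonneg_nonneg _ _ (Zle_0_nat (Acnt (nseq m Straight) s12)) hP5.
lia.
Qed.
Lemma keyR m (u0 u1 u2 u3 u4 u5 u6 u7 u8 : Z) (hu0 : (0 <= u0)%Z) (hu1 : (0 <= u1)%Z) (hu2 : (0 <= u2)%Z) (hu3 : (0 <= u3)%Z) (hu4 : (0 <= u4)%Z) (hu5 : (0 <= u5)%Z) (hu6 : (0 <= u6)%Z) (hu7 : (0 <= u7)%Z) (hu8 : (0 <= u8)%Z) (H0 : (0 <= (u0 + u1 + (-1) * u2 + (-1) * u3 + (-1) * u7 + u8))%Z) (H1 : (0 <= ((-1) * u2 + (-1) * u3 + u8))%Z) (H2 : (0 <= (u0 + (-1) * u1 + u2 + (-1) * u3 + (-1) * u5 + u8))%Z) (H3 : (0 <= ((-1) * u1 + (-1) * u3 + u8))%Z) (H4 : (0 <= (u0 + (3) * u1 + u2 + (3) * u3 + u4 + u5 + u6 + u7 + (-1) * u8))%Z) (H5 : (0 <= (u0 + u1 + (3) * u2 + (3) * u3 + u4 + u5 + u6 + u7 + (-1) * u8))%Z) : ((u0 * Z.of_nat (Acnt (KinkR :: nseq m Straight) s1) + u1 * Z.of_nat (Acnt (KinkR :: nseq m Straight) s3) + u2 * Z.of_nat (Acnt (KinkR :: nseq m Straight) s2) + u3 * Z.of_nat (Acnt (KinkR :: nseq m Straight) s4) + u4 * Z.of_nat (Acnt (KinkR :: nseq m Straight) s6) + u5 * Z.of_nat (Acnt (KinkR :: nseq m Straight) s7) + u6 * Z.of_nat (Acnt (KinkR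 :: nseq m Straight) s9) + u7 * Z.of_nat (Acnt (KinkR :: nseq m Straight) s10) + u8 * Z.of_nat (Acnt (KinkR :: nseq m Straight) s12)) <= (u0 * Z.of_nat (Acnt (Straight :: nseq m Straight) s1) + u1 * Z.of_nat (Acnt (Straight :: nseq m Straight) s3) + u2 * Z.of_nat (Acnt (Straight :: nseq m Straight) s2) + u3 * Z.of_nat (Acnt (Straight :: nseq m Straight) s4) + u4 * Z.of_nat (Acnt (Straight :: nseq m Straight) s6) + u5 * Z.of_nat (Acnt (Straight :: nseq m Straight) s7) + u6 * Z.of_nat (Acnt (Straight :: nseq m Straight) s9) + u7 * Z.of_nat (Acnt (Straight :: nseq m Straight) s10) + u8 * Z.of_nat (Acnt (Straight :: nseq m Straight) s12)))%Z.
Proof.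
case: m => [|[|[|m]]]; first by rewrite ?vR0_0 ?vS0_0 ?vR0_1 ?vS0_1 ?vR0_2 ?vS0_2 ?vR0_3 ?vS0_3 ?vR0_4 ?vS0_4 ?vR0_5 ?vS0_5 ?vR0_6 ?vS0_6 ?vR0_7 ?vS0_7 ?vR0_8 ?vS0_8; lia.
- by rewrite ?vR1_0 ?vS1_0 ?vR1_1 ?vS1_1 ?vR1_2 ?vS1_2 ?vR1_3 ?vS1_3 ?vR1_4 ?vS1_4 ?vR1_5 ?vS1_5 ?vR1_6 ?vS1_6 ?vR1_7 ?vS1_7 ?vR1_8 ?vS1_8; lia.
- by rewrite ?vR2_0 ?vS2_0 ?vR2_1 ?vS2_1 ?vR2_2 ?vS2_2 ?vR2_3 ?vS2_3 ?vR2_4 ?vS2_4 ?vR2_5 ?vS2_5 ?vR2_6 ?vS2_6 ?vR2_7 ?vS2_7 ?vR2_8 ?vS2_8; lia.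
rewrite !nseqS; do 5 rewrite ?rR0 ?rR1 ?rR2 ?rR3 ?rR4 ?rR5 ?rR6 ?rR7 ?rR8 ?rS0 ?rS1 ?rS2 ?rS3 ?rS4 ?rS5 ?rS6 ?rS7 ?rS8.
have [e1 [e2 e3]] := symS m; rewrite e1 e2 e3.
have hP0 : (0 <= ((2) * u0 + (-5) * u1 + (2) * u2 + (-5) * u3 + (-2) * u5 + (5) * u6 + (5) * u8))%Z by lia.
have := Z.mul_nonneg_nonneg _ _ (Zle_0_nat (Acnt (nseq m Straight) s1)) hP0.
have hP1 : (0 <= ((3) * u0 + (-4) * u1 + (3) * u2 + (-4) * u3 + (-3) * u5 + (6) * u6 + (4) * u8))%Z by lia.
have := Z.mul_nonneg_nonneg _ _ (Zle_0_nat (Acnt (nseq m Straight) s3)) hP1.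
have hP2 : (0 <= (u0 + (-4) * u1 + u2 + (-4) * u3 + (-1) * u5 + (3) * u6 + (4) * u8))%Z by lia.
have := Z.mul_nonneg_nonneg _ _ (Zle_0_nat (Acnt (nseq m Straight) s4)) hP2.
have hP3 : (0 <= ((6) * u0 + (-11) * u1 + (6) * u2 + (-11) * u3 + (-6) * u5 + (13) * u6 + (11) * u8))%Z by lia.
have := Z.mul_nonneg_nonneg _ _ (Zle_0_nat (Acnt (nseq m Straight) s6)) hP3.
have hP4 : (0 <= ((4) * u0 + (-8) * u1 + (4) * u2 + (-8) * u3 + (-4) * u5 + (9) * u6 + (8) * u8))%Z by lia.
have := Z.mul_nonneg_nonneg _ _ (Zle_0_nat (Acnt (nseq m Straight) s7)) hP4.
have hP5 : (0 <= ((10) * u0 + (-19) * u1 + (10) * u2 + (-19) * u3 + (-10) * u5 + (22) * u6 + (19) * u8))%Z by lia.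
have := Z.mul_nonneg_nonneg _ _ (Zle_0_nat (Acnt (nseq m Straight) s12)) hP5.
lia.
Qed.

Lemma main ws : forall (u0 u1 u2 u3 u4 u5 u6 u7 u8 : Z) (hu0 : (0 <= u0)%Z) (hu1 : (0 <= u1)%Z) (hu2 : (0 <= u2)%Z) (hu3 : (0 <= u3)%Z) (hu4 : (0 <= u4)%Z) (hu5 : (0 <= u5)%Z) (hu6 : (0 <= u6)%Z) (hu7 : (0 <= u7)%Z) (hu8 : (0 <= u8)%Z) (H0 : (0 <= (u0 + u1 + (-1) * u2 + (-1) * u3 + (-1) * u7 + u8))%Z) (H1 : (0 <= ((-1) * u2 + (-1) * u3 + u8))%Z) (H2 : (0 <= (u0 + (-1) * u1 + u2 + (-1) * u3 + (-1) * u5 + u8))%Z) (H3 : (0 <= ((-1) * u1 + (-1) * u3 + u8))%Z) (H4 : (0 <= (u0 + (3) * u1 + u2 + (3) * u3 + u4 + u5 + u6 + u7 + (-1) * u8))%Z) (H5 : (0 <= (u0 + u1 + (3) * u2 + (3) * u3 + u4 + u5 + u6 + u7 + (-1) * u8))%Z), ((u0 * Z.of_nat (Acnt ws s1) + u1 * Z.of_nat (Acnt ws s3) + u2 * Z.of_nat (Acnt ws s2) + u3 * Z.of_nat (Acnt ws s4) + u4 * Z.of_nat (Acnt ws s6) + u5 * Z.of_nat (Acnt ws s7) + u6 * Z.of_nat (Acnt ws s9) + u7 * Z.of_nat (Acnt ws s10) + u8 * Z.of_nat (Acnt ws s12)) <= (u0 * Z.of_nat (Acnt (nseq (size ws) Straight)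 s1) + u1 * Z.of_nat (Acnt (nseq (size ws) Straight) s3) + u2 * Z.of_nat (Acnt (nseq (size ws) Straight) s2) + u3 * Z.of_nat (Acnt (nseq (size ws) Straight) s4) + u4 * Z.of_nat (Acnt (nseq (size ws) Straight) s6) + u5 * Z.of_nat (Acnt (nseq (size ws) Straight) s7) + u6 * Z.of_nat (Acnt (nseq (size ws) Straight) s9) + u7 * Z.of_nat (Acnt (nseq (size ws) Straight) s10) + u8 * Z.of_nat (Acnt (nseq (size ws) Straight) s12)))%Z.
Proof.
elim: ws => [|w ws IH] u0 u1 u2 u3 u4 u5 u6 u7 u8 hu0 hu1 hu2 hu3 hu4 hu5 hu6 hu7 hu8 H0 H1 H2 H3 H4 H5; first exact: Z.le_refl.
rewrite [size _]/= nseqS.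
case: w.
- rewrite ?rS0 ?rS1 ?rS2 ?rS3 ?rS4 ?rS5 ?rS6 ?rS7 ?rS8 ?rS0 ?rS1 ?rS2 ?rS3 ?rS4 ?rS5 ?rS6 ?rS7 ?rS8. have I := IH ((u8))%Z ((u6 + u7))%Z ((u4 + u5))%Z ((u0 + u1 + u2 + u3))%Z ((u7 + u8))%Z ((u1 + u3 + u4 + u5))%Z ((u5 + u8))%Z ((u2 + u3 + u6 + u7))%Z ((u0 + u1 + u2 + u3 + u4 + (2) * u5 + u6 + (2) * u7 + (2) * u8))%Z ltac:(lia) ltac:(lia) ltac:(lia) ltac:(lia) ltac:(lia) ltac:(lia) ltac:(lia) ltac:(lia) ltac:(lia) ltac:(lia) ltac:(lia) ltac:(lia) ltac:(lia) ltac:(lia) ltac:(lia). lia.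
- have K := @keyL (size ws) u0 u1 u2 u3 u4 u5 u6 u7 u8 hu0 hu1 hu2 hu3 hu4 hu5 hu6 hu7 hu8 H0 H1 H2 H3 H4 H5. rewrite ?rL0 ?rL1 ?rL2 ?rL3 ?rL4 ?rL5 ?rL6 ?rL7 ?rL8 ?rS0 ?rS1 ?rS2 ?rS3 ?rS4 ?rS5 ?rS6 ?rS7 ?rS8 in K. rewrite ?rL0 ?rL1 ?rL2 ?rL3 ?rL4 ?rL5 ?rL6 ?rL7 ?rL8 ?rS0 ?rS1 ?rS2 ?rS3 ?rS4 ?rS5 ?rS6 ?rS7 ?rS8. have I := IH ((u2 + u3))%Z ((u5))%Z ((u6 + u7))%Z ((u7 + u8))%Z ((u2 + u3 + u5))%Z ((u6 + u7 + u8))%Z ((u0 + u1 + u2 + u3))%Z ((u1 + u3 + u4 + u5))%Z ((u0 + u1 + (2) * u2 + (2) * u3 + u4 + (2) * u5 + u6 + (2) * u7 + u8))%Z ltac:(lia) ltac:(lia) ltac:(lia) ltac:(lia) ltac:(lia) ltac:(lia) ltac:(lia) ltac:(lia) ltac:(lia) ltac:(lia) ltac:(lia) ltac:(lia) ltac:(lia) ltac:(lia) ltac:(lia). lia.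
- have K := @keyR (size ws) u0 u1 u2 u3 u4 u5 u6 u7 u8 hu0 hu1 hu2 hu3 hu4 hu5 hu6 hu7 hu8 H0 H1 H2 H3 H4 H5. rewrite ?rR0 ?rR1 ?rR2 ?rR3 ?rR4 ?rR5 ?rR6 ?rR7 ?rR8 ?rS0 ?rS1 ?rS2 ?rS3 ?rS4 ?rS5 ?rS6 ?rS7 ?rS8 in K. rewrite ?rR0 ?rR1 ?rR2 ?rR3 ?rR4 ?rR5 ?rR6 ?rR7 ?rR8 ?rS0 ?rS1 ?rS2 ?rS3 ?rS4 ?rS5 ?rS6 ?rS7 ?rS8. have I := IH ((u1 + u3))%Z ((u4 + u5))%Z ((u7))%Z ((u5 + u8))%Z ((u0 + u1 + u2 + u3))%Z ((u2 + u3 + u6 + u7))%Z ((u1 + u3 + u7))%Z ((u4 + u5 + u8))%Z ((u0 + (2) * u1 + u2 + (2) * u3 + u4 + (2) * u5 + u6 + (2) * u7 + u8))%Z ltac:(lia) ltac:(lia) ltac:(lia) ltac:(lia) ltac:(lia) ltac:(lia) ltac:(lia) ltac:(lia) ltac:(lia) ltac:(lia) ltac:(lia) ltac:(lia) ltac:(lia) ltac:(lia) ltac:(lia). lia.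
Qed.
Definition L0 := map (stof 0 1) (leaves hex0_edges (fun _ => false) (fun _ => true)).
Lemma L0E : L0 = [:: s16; s11; s12; s11; s11; s15; s6; s7; s11; s5; s4; s10; s0; s9; s1; s0; s8; s0]. Proof. by vm_compute. Qed.
Lemma startE ws : sumn (map (Acnt ws) L0) = 1 * Acnt ws s1 + 1 * Acnt ws s4 + 1 * Acnt ws s6 + 1 * Acnt ws s7 + 1 * Acnt ws s9 + 1 * Acnt ws s10 + 3 * Acnt ws s12.
Proof. have := struct ws; move=> [h0 [h1 [h2 [h3 [h4 [h5 [h6 h7]]]]]]]. rewrite L0E /= ?h0 ?h1 ?h2 ?h3 ?h4 ?h5 ?h6 ?h7; lia. Qed.
Lemma start_le ws : sumn (map (Acnt ws) L0) <= sumn (map (Acnt (nseq (size ws) Straight)) L0).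
Proof. rewrite !startE. have := @main ws 1%Z 0%Z 0%Z 1%Z 1%Z 1%Z 1%Z 1%Z 3%Z ltac:(lia) ltac:(lia) ltac:(lia) ltac:(lia) ltac:(lia) ltac:(lia) ltac:(lia) ltac:(lia) ltac:(lia) ltac:(lia) ltac:(lia) ltac:(lia) ltac:(lia) ltac:(lia) ltac:(lia). lia. Qed.


Lemma cnt_chain n ws : 1 < n ->
  cnt (chain_edges n ws) (fun _ => false) (fun _ => true) = sumn (map (Acnt ws) L0).
Proof.
move=> hn.
have -> : chain_edges n ws = hex0_edges ++ tail_edges ws 0 1 6 by rewrite /chain_edges leqNgt hn.
rewrite cnt_cat /L0 -map_comp.
have rel := @leaves_rel (fun v => v) (fun v => v < 6) (fun _ => True) (fun _ => True)
   hex0_edges (fun _ => false) (fun _ => false) (fun _ => true) (fun _ => true)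
   (fun u v _ _ h => h) isT (fun _ _ => erefl) (fun _ _ _ _ _ => erefl).
rewrite (_ : mapE (fun v => v) hex0_edges = hex0_edges) // in rel.
symmetry; apply: F2_sumn rel => l1 l2 [h1 h2 h3] /=.
rewrite /stof (h1 0) // (h1 1) //.
rewrite (@Labs ws 0 1 6 l2.1 l2.2 (r4of (fun p q => l1.2 (upd l1.1 0 1 p q)))) //.
- move=> v hv; apply/negbTE/negP => hv2.
  have [|u hu hs] := h3 v; [by rewrite hv2 | lia].
- move=> G hG; rewrite rf_r4of; symmetry; apply: h2 => // u hu; rewrite /upd.
  case: (u =P 0) => [->//|u0]; case: (u =P 1) => [->//|u1].
  rewrite h1 // hG //; [apply/eqP|apply/eqP]; done.
Qed.

Theorem theorem4p6 (n : nat) (ws : seq annel) :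
  1 <= n -> size ws = n - 2 ->
  Psi (chain_edges n ws) <= Psi (polyacene n).
Proof.
move=> h1 hs; case: (ltnP 1 n) => hn.
  rewrite /polyacene !Psi_cnt !cnt_chain // -hs; exact: start_le.
have -> : n = 1 by apply/eqP; rewrite eqn_leq hn h1.
exact: leqnn.
Qed.
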